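(* Let $n\ge2$. The group $VSPG_n$ is generated by $\{\mu_{ij},\gamma_{ij}\mid 1\le i\ne j\le n\}$ subject to the defining relations (where distinct letters denote distinct indices in $\{1,\dots,n\}$): $\mu_{ij}\mu_{ik}\mu_{jk}=\mu_{jk}\mu_{ik}\mu_{ij}$; $\mu_{ij}\mu_{ik}\gamma_{jk}=\gamma_{jk}\mu_{ik}\mu_{ij}$; $\gamma_{ij}\mu_{ik}\mu_{jk}=\mu_{jk}\mu_{ik}\gamma_{ij}$; $\mu_{ij}\gamma_{ji}=\gamma_{ij}\mu_{ji}$; $\mu_{ij}\mu_{kl}=\mu_{kl}\mu_{ij}$, $\gamma_{ij}\gamma_{kl}=\gamma_{kl}\gamma_{ij}$, $\mu_{ij}\gamma_{kl}=\gamma_{kl}\mu_{ij}$.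
   Context: Let $n\ge 2$. $VSG_n$ is the group generated by $\sigma_i,v_i,\tau_i$ ($1\le i\le n-1$) subject to: $v_i^2=1$; $\sigma_i\tau_i=\tau_i\sigma_i$; for $|i-j|=1$: $\sigma_i\sigma_j\sigma_i=\sigma_j\sigma_i\sigma_j$, $v_iv_jv_i=v_jv_iv_j$, $v_i\sigma_jv_i=v_j\sigma_iv_j$, $v_i\tau_jv_i=v_j\tau_iv_j$, $\sigma_i\sigma_j\tau_i=\tau_j\sigma_i\sigma_j$; for $|i-j|>1$: $g_ih_j=h_jg_i$ for $g_i,h_i\in\{\sigma_i,\tau_i,v_i\}$. Let $\pi:VSG_n\to S_n$ be the homomorphism with $\pi(\sigma_i)=\pi(v_i)=\pi(\tau_i)=(i,i+1)$, and $VSPG_n:=\ker\pi$. Elementary fusing strings: $\mu_{i,i+1}:=\sigma_iv_i$, $\gamma_{i,i+1}:=\tau_iv_i$. Generalized fusing strings: for $1\le i<j\le n$, $\mu_{ij}:=(v_{j-1}\cdots v_{i+1})\mu_{i,i+1}(v_{i+1}\cdots v_{j-1})$, $\gamma_{ij}:=(v_{j-1}\cdots v_{i+1})\gamma_{i,i+1}(v_{i+1}\cdots v_{j-1})$, $\mu_{ji}:=(v_{j-1}\cdots v_{i+1})v_i\mu_{i,i+1}v_i(v_{i+1}\cdots v_{j-1})$, $\gamma_{ji}:=(v_{j-1}\cdots v_{i+1})v_i\gamma_{i,i+1}v_i(v_{i+1}\cdots v_{j-1})$. *)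

(* Defs.v *)
(* Finitely presented groups are encoded by their
   word problem: words over a generator alphabet (letters with an inverse flag)
   modulo the congruence generated by free cancellation and the relators. *)
From mathcomp Require Import all_boot.
Set Implicit Arguments. Unset Strict Implicit. Unset Printing Implicit Defensive.

(* a letter (g, false) is the generator g, (g, true) is g^-1 *)
Definition word (G : Type) := seq (G * bool).

Definition winv (G : Type) (w : word G) : word G :=
  rev (map (fun l => (l.1, ~~ l.2)) w).

Inductive cong (G : Type) (R : word G -> word G -> Prop) : word G -> word G -> Prop :=
| cong_rel u v : R u v -> cong R u v
| cong_free g b : cong R [:: (g, b); (g, ~~ b)] [::]
| cong_refl u : cong R u u
| cong_sym u v : cong R u v -> cong R v u
| cong_trans u v w : cong R u v -> cong R v w -> cong R u w
| cong_cat u u' v v' : cong R u u' -> cong R v v' -> cong R (u ++ v) (u' ++ v').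

Definition pw (G : Type) (s : seq G) : word G := map (fun g => (g, false)) s.

Inductive gen1 := Sg of nat | Vg of nat | Tg of nat.

Definition idx1 (g : gen1) : nat := match g with Sg i | Vg i | Tg i => i end.

Definition valid1 (n i : nat) : bool := (0 < i) && (i < n).
Definition adj (i j : nat) : bool := (i.+1 == j) || (j.+1 == i).
Definition far (i j : nat) : bool := (i.+1 < j) || (j.+1 < i).

Definition wf1 (n : nat) (w : word gen1) : bool := all (fun l => valid1 n (idx1 l.1)) w.

Inductive rel1 (n : nat) : word gen1 -> word gen1 -> Prop :=
| r1_vv i : valid1 n i -> rel1 n (pw [:: Vg i; Vg i]) [::]
| r1_st i : valid1 n i -> rel1 n (pw [:: Sg i; Tg i]) (pw [:: Tg i; Sg i])
| r1_sss i j : valid1 n i -> valid1 n j -> adj i j ->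
    rel1 n (pw [:: Sg i; Sg j; Sg i]) (pw [:: Sg j; Sg i; Sg j])
| r1_vvv i j : valid1 n i -> valid1 n j -> adj i j ->
    rel1 n (pw [:: Vg i; Vg j; Vg i]) (pw [:: Vg j; Vg i; Vg j])
| r1_vsv i j : valid1 n i -> valid1 n j -> adj i j ->
    rel1 n (pw [:: Vg i; Sg j; Vg i]) (pw [:: Vg j; Sg i; Vg j])
| r1_vtv i j : valid1 n i -> valid1 n j -> adj i j ->
    rel1 n (pw [:: Vg i; Tg j; Vg i]) (pw [:: Vg j; Tg i; Vg j])
| r1_sst i j : valid1 n i -> valid1 n j -> adj i j ->
    rel1 n (pw [:: Sg i; Sg j; Tg i]) (pw [:: Tg j; Sg i; Sg j])
| r1_far g h : valid1 n (idx1 g) -> valid1 n (idx1 h) -> far (idx1 g) (idx1 h) ->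
    rel1 n (pw [:: g; h]) (pw [:: h; g]).

(* the homomorphism pi : VSG_n -> S_n, S_n realised as permutations of nat
   supported in {1,...,n}; every generator with index i maps to (i, i+1) *)
Definition swap (i k : nat) : nat :=
  if k == i then i.+1 else if k == i.+1 then i else k.

Definition piw (w : word gen1) : nat -> nat :=
  foldr (fun l f => swap (idx1 l.1) \o f) id w.

(* w represents an element of VSPG_n = ker pi *)
Definition in_ker (w : word gen1) : Prop := forall k, piw w k = k.

Inductive gen2 := Mu of nat & nat | Ga of nat & nat.

Definition valid2 (n : nat) (g : gen2) : bool :=
  match g with
  | Mu i j | Ga i j => [&& 0 < i, i <= n, 0 < j, j <= n & i != j]
  end.

Definition wf2 (n : nat) (w : word gen2) : bool := all (fun l => valid2 n l.1) w.

Definition dist3 (i j k : nat) : bool := [&& i != j, i != k & j != k].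
Definition dist4 (i j k l : nat) : bool :=
  [&& dist3 i j k, i != l, j != l & k != l].
Definition valid_ix (n i : nat) : bool := (0 < i) && (i <= n).

Inductive rel2 (n : nat) : word gen2 -> word gen2 -> Prop :=
| r2_mmm i j k : valid_ix n i -> valid_ix n j -> valid_ix n k -> dist3 i j k ->
    rel2 n (pw [:: Mu i j; Mu i k; Mu j k]) (pw [:: Mu j k; Mu i k; Mu i j])
| r2_mmg i j k : valid_ix n i -> valid_ix n j -> valid_ix n k -> dist3 i j k ->
    rel2 n (pw [:: Mu i j; Mu i k; Ga j k]) (pw [:: Ga j k; Mu i k; Mu i j])
| r2_gmm i j k : valid_ix n i -> valid_ix n j -> valid_ix n k -> dist3 i j k ->
    rel2 n (pw [:: Ga i j; Mu i k; Mu j k]) (pw [:: Mu j k; Mu i k; Ga i j])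
| r2_mg i j : valid_ix n i -> valid_ix n j -> i != j ->
    rel2 n (pw [:: Mu i j; Ga j i]) (pw [:: Ga i j; Mu j i])
| r2_mumu i j k l : valid_ix n i -> valid_ix n j -> valid_ix n k -> valid_ix n l ->
    dist4 i j k l -> rel2 n (pw [:: Mu i j; Mu k l]) (pw [:: Mu k l; Mu i j])
| r2_gaga i j k l : valid_ix n i -> valid_ix n j -> valid_ix n k -> valid_ix n l ->
    dist4 i j k l -> rel2 n (pw [:: Ga i j; Ga k l]) (pw [:: Ga k l; Ga i j])
| r2_muga i j k l : valid_ix n i -> valid_ix n j -> valid_ix n k -> valid_ix n l ->
    dist4 i j k l -> rel2 n (pw [:: Mu i j; Ga k l]) (pw [:: Ga k l; Mu i j]).

Definition vup (i j : nat) : seq gen1 := map Vg (iota i.+1 (j - i.+1)).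
Definition vdown (i j : nat) : seq gen1 := rev (vup i j).

(* for i < j:  mu_ij, gamma_ij, mu_ji, gamma_ji as in the paper *)
Definition fus_lt (X : nat -> gen1) (i j : nat) : seq gen1 :=
  vdown i j ++ [:: X i; Vg i] ++ vup i j.
Definition fus_gt (X : nat -> gen1) (i j : nat) : seq gen1 :=
  vdown i j ++ [:: Vg i; X i; Vg i; Vg i] ++ vup i j.

Definition fusing (g : gen2) : seq gen1 :=
  match g with
  | Mu a b => if a < b then fus_lt Sg a b else fus_gt Sg b a
  | Ga a b => if a < b then fus_lt Tg a b else fus_gt Tg b a
  end.

Definition ev_letter (l : gen2 * bool) : word gen1 :=
  if l.2 then winv (pw (fusing l.1)) else pw (fusing l.1).

(* substitution of the fusing strings: the natural map <gen2 | rel2> -> VSG_n *)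
Definition ev (w : word gen2) : word gen1 := flatten (map ev_letter w).

(* Main.v *)
Require Import Defs.
From mathcomp Require Import all_boot zify.
From Stdlib Require Import FunctionalExtensionality.
Set Implicit Arguments. Unset Strict Implicit. Unset Printing Implicit Defensive.

Section Cong.
Variables (G : Type) (R : word G -> word G -> Prop).
Notation C := (cong R).

Lemma cT u v w : C u v -> C v w -> C u w.
Proof. exact: cong_trans. Qed.
Lemma cS u v : C u v -> C v u.
Proof. exact: cong_sym. Qed.
Lemma cX a u v b : C u v -> C (a ++ u ++ b) (a ++ v ++ b).
Proof. move=> h; apply: cong_cat; [exact: cong_refl| apply: cong_cat => //; exact: cong_refl]. Qed.
Lemma cX' a u v b w1 w2 : w1 = a ++ u ++ b -> w2 = a ++ v ++ b -> C u v -> C w1 w2.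
Proof. by move=> -> -> /cX. Qed.

Lemma winv_cat (u v : word G) : winv (u ++ v) = winv v ++ winv u.
Proof. by rewrite /winv map_cat rev_cat. Qed.
Lemma winvK (w : word G) : winv (winv w) = w.
Proof.
rewrite /winv map_rev revK -map_comp.
elim: w => //= -[g b] w IH /=; by rewrite negbK IH.
Qed.
Lemma winv_cons (l : G * bool) (w : word G) : winv (l :: w) = winv w ++ [:: (l.1, ~~ l.2)].
Proof. by rewrite /winv /= rev_cons cats1. Qed.

Lemma winv_r (w : word G) : C (w ++ winv w) [::].
Proof.
elim: w => [|[g b] w IH] /=; first exact: cong_refl.
rewrite winv_cons /=.
apply: (cT (v := [:: (g, b)] ++ [::] ++ [:: (g, ~~ b)])).
  apply: (cX' (a := [:: (g,b)]) (u := w ++ winv w) (b := [:: (g, ~~b)])) => //.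
  by rewrite /= catA.
exact: cong_free.
Qed.
Lemma winv_l (w : word G) : C (winv w ++ w) [::].
Proof. by have := winv_r (winv w); rewrite winvK. Qed.
Lemma cong_winv u v : C u v -> C (winv u) (winv v).
Proof.
move=> h.
apply: (cT (v := winv u ++ (v ++ winv v))).
  apply: (cX' (a := winv u) (u := [::]) (b := [::])); rewrite ?cats0 //.
  exact/cS/winv_r.
apply: (cT (v := winv u ++ (u ++ winv v))).
  apply: (cX' (a := winv u) (u := v) (b := winv v)) => //; exact: cS.
rewrite catA.
apply: (cX' (a := [::]) (u := winv u ++ u) (v := [::]) (b := winv v)) => //.
exact: winv_l.
Qed.
End Cong.

Ltac swsimp := rewrite /swap; repeat match goal with
  |- context [?a == ?b] => lazymatch a with context [if _ then _ else _] => fail | _ =>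
     lazymatch b with context [if _ then _ else _] => fail | _ => case: (@eqP _ a b) => ? end end end.
Lemma swapK i k : swap i (swap i k) = k.
Proof. swsimp; lia. Qed.
Lemma swap_l i : swap i i = i.+1.
Proof. by rewrite /swap eqxx. Qed.
Lemma swap_r i : swap i i.+1 = i.
Proof. swsimp; lia. Qed.
Lemma swap_o i k : k != i -> k != i.+1 -> swap i k = k.
Proof. by rewrite /swap => /negbTE -> /negbTE ->. Qed.
Lemma swap_inj i : injective (swap i).
Proof. by move=> x y h; rewrite -(swapK i x) h swapK. Qed.
Lemma swap_braid i k : swap i (swap i.+1 (swap i k)) = swap i.+1 (swap i (swap i.+1 k)).
Proof. swsimp; lia. Qed.
Lemma swap_far i j k : far i j -> swap i (swap j k) = swap j (swap i k).
Proof. rewrite /far => h; swsimp; lia. Qed.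

Ltac swsimp2 := try rewrite /swap; repeat match goal with
  |- context [?a == ?b] => lazymatch a with context [if _ then _ else _] => fail | _ =>
     lazymatch b with context [if _ then _ else _] => fail | _ => case: (@eqP _ a b) => ? end end end;
  try (exfalso; lia).

Lemma swE1 i x : x = i -> swap i x = i.+1. Proof. move=> ->; exact: swap_l. Qed.
Lemma swE2 i x : x = i.+1 -> swap i x = i. Proof. move=> ->; exact: swap_r. Qed.
Lemma swE3 i x : x <> i -> x <> i.+1 -> swap i x = x.
Proof. by move=> h1 h2; apply: swap_o; apply/eqP. Qed.
Ltac sw := repeat match goal with |- context [swap ?i ?x] =>
  first [ rewrite (@swE1 i x); last by lia | rewrite (@swE2 i x); last by lia
        | rewrite (@swE3 i x); [|lia|lia] ] end.

Section S.
Variable n : nat.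

Definition vl (l : gen1 * bool) := valid1 n (idx1 l.1).
Definition step (p : nat -> nat) (l : gen1 * bool) : nat -> nat :=
  if vl l then p \o swap (idx1 l.1) else p.
Definition stp p (w : word gen1) := foldl step p w.
Definition rl (p : nat -> nat) (l : gen1 * bool) : word gen2 :=
  if vl l then match l with
   | (Sg i, false) => [:: (Mu (p i) (p i.+1), false)]
   | (Sg i, true) => [:: (Mu (p i.+1) (p i), true)]
   | (Tg i, false) => [:: (Ga (p i) (p i.+1), false)]
   | (Tg i, true) => [:: (Ga (p i.+1) (p i), true)]
   | (Vg _, _) => [::] end else [::].
Fixpoint rho p (w : word gen1) : word gen2 :=
  match w with [::] => [::] | l :: w' => rl p l ++ rho (step p l) w' end.

Lemma rho_cat p u v : rho p (u ++ v) = rho p u ++ rho (stp p u) v.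
Proof. by elim: u p => //= l u IH p; rewrite IH catA. Qed.
Lemma stp_cat p u v : stp p (u ++ v) = stp (stp p u) v.
Proof. by rewrite /stp foldl_cat. Qed.

Definition gd (p : nat -> nat) := (forall k, valid_ix n k -> valid_ix n (p k)) /\ injective p.

Lemma gd_step p l : gd p -> gd (step p l).
Proof.
rewrite /step; case: ifP => // hv [h1 h2]; split.
  move=> k hk /=; apply: h1; move: hv hk; rewrite /vl /valid1 /valid_ix; swsimp; lia.
by apply: inj_comp => //; exact: swap_inj.
Qed.
Lemma gd_stp p w : gd p -> gd (stp p w).
Proof. by elim: w p => //= l w IH p hp; apply: IH; apply: gd_step. Qed.

Lemma adjP i j : adj i j -> j = i.+1 \/ i = j.+1.
Proof. by rewrite /adj => /orP [/eqP -> | /eqP ->]; [left|right]. Qed.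

Lemma st_cong w w' : cong (rel1 n) w w' -> forall p, stp p w = stp p w'.
Proof.
elim => {w w'}.
- move=> u v [] {u v}.
  + move=> i hi p; rewrite /stp /= /step /vl /= hi; apply: functional_extensionality => x /=; by rewrite swapK.
  + move=> i hi p; by rewrite /stp /= /step /vl /= hi.
  + move=> i j hi hj /adjP [?|?] p; subst; rewrite /stp /= /step /vl /= ?hi ?hj;
      apply: functional_extensionality => x /=; by rewrite swap_braid.
  + move=> i j hi hj /adjP [?|?] p; subst; rewrite /stp /= /step /vl /= ?hi ?hj;
      apply: functional_extensionality => x /=; by rewrite swap_braid.
  + move=> i j hi hj /adjP [?|?] p; subst; rewrite /stp /= /step /vl /= ?hi ?hj;
      apply: functional_extensionality => x /=; by rewrite swap_braid.
  + move=> i j hi hj /adjP [?|?] p; subst; rewrite /stp /= /step /vl /= ?hi ?hj;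
      apply: functional_extensionality => x /=; by rewrite swap_braid.
  + move=> i j hi hj /adjP [?|?] p; subst; rewrite /stp /= /step /vl /= ?hi ?hj;
      apply: functional_extensionality => x /=; by rewrite swap_braid.
  + move=> g h hg hh hf p; rewrite /stp /= /step /vl /= hg hh;
      apply: functional_extensionality => x /=; by rewrite swap_far.
- move=> g b p; rewrite /stp /= /step /vl /=; case: (valid1 _ _) => //.
  apply: functional_extensionality => x /=; by rewrite swapK.
- by [].
- by move=> u v H IH p; rewrite IH.
- by move=> u v w H1 IH1 H2 IH2 p; rewrite IH1.
- move=> u u' v v' H1 IH1 H2 IH2 p; by rewrite !stp_cat IH1 IH2.
Qed.
End S.

Section S.
Variable n : nat.

Ltac side h1 h2 := try (apply: h1); rewrite /valid_ix /dist4 /dist3 ?(inj_eq h2); unfold valid1, far in *; simpl in *; lia.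

Lemma rho_cong w w' : cong (rel1 n) w w' -> forall p, gd n p -> cong (rel2 n) (rho n p w) (rho n p w').
Proof.
elim => {w w'}.
- move=> u v [] {u v}.
  + move=> i hi p _; rewrite /= /rl /step /vl /= hi /=; exact: cong_refl.
  + move=> i hi p [h1 h2]; rewrite /= /rl /step /vl /= hi /=; sw.
    apply: cong_rel; apply: r2_mg; side h1 h2.
  + move=> i j hi hj /adjP [?|?] p [h1 h2]; subst; rewrite /= /rl /step /vl /= ?hi ?hj /=; sw.
    * apply: cong_rel; apply: r2_mmm; side h1 h2.
    * apply: cong_sym; apply: cong_rel; apply: r2_mmm; side h1 h2.
  + move=> i j hi hj _ p _; rewrite /= /rl /step /vl /= ?hi ?hj /=; exact: cong_refl.
  + move=> i j hi hj /adjP [?|?] p [h1 h2]; subst; rewrite /= /rl /step /vl /= ?hi ?hj /=; sw; exact: cong_refl.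
  + move=> i j hi hj /adjP [?|?] p [h1 h2]; subst; rewrite /= /rl /step /vl /= ?hi ?hj /=; sw; exact: cong_refl.
  + move=> i j hi hj /adjP [?|?] p [h1 h2]; subst; rewrite /= /rl /step /vl /= ?hi ?hj /=; sw.
    * apply: cong_rel; apply: r2_mmg; side h1 h2.
    * apply: cong_sym; apply: cong_rel; apply: r2_gmm; side h1 h2.
  + move=> g h hg hh hf p [h1 h2].
    move: hf; rewrite /far => hf; case: g hg hf => i /= hi hf; case: h hh hf => j /= hj hf;
      rewrite /= /rl /step /vl /= ?hi ?hj /=; sw; try exact: cong_refl.
    * apply: cong_rel; apply: r2_mumu; side h1 h2.
    * apply: cong_rel; apply: r2_muga; side h1 h2.
    * apply: cong_sym; apply: cong_rel; apply: r2_muga; side h1 h2.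
    * apply: cong_rel; apply: r2_gaga; side h1 h2.
- move=> g b p _; rewrite /= /rl /step /vl /=; case: (valid1 _ _) => /=; last exact: cong_refl.
  case: g => i; case: b => /=; rewrite ?swap_l ?swap_r; try exact: cong_refl; exact: cong_free.
- move=> u p _; exact: cong_refl.
- move=> u v H IH p hp; exact/cong_sym/IH.
- move=> u v w H1 IH1 H2 IH2 p hp; exact: cong_trans (IH1 p hp) (IH2 p hp).
- move=> u u' v v' H1 IH1 H2 IH2 p hp; rewrite !rho_cat (st_cong H1).
  apply: cong_cat; first exact: IH1.
  apply: IH2; exact: gd_stp.
Qed.
End S.

Definition fs (s : seq nat) (x : nat) : nat := foldr swap x s.
Lemma fs_cat s1 s2 x : fs (s1 ++ s2) x = fs s1 (fs s2 x).
Proof. by rewrite /fs foldr_cat. Qed.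
Lemma fs_revK s x : fs (rev s) (fs s x) = x.
Proof.
elim: s x => //= k s IH x; rewrite rev_cons -cats1 fs_cat /= swapK; exact: IH.
Qed.
Lemma fs_revK' s x : fs s (fs (rev s) x) = x.
Proof. by have := fs_revK (rev s) x; rewrite revK. Qed.
Lemma fs_low s x : all (fun k => x < k) s -> fs s x = x.
Proof.
elim: s => //= k s IH /andP [hk hs]; rewrite IH // swap_o //; apply/eqP; lia.
Qed.
Lemma fs_iota a m : fs (rev (iota a m)) a = a + m.
Proof.
elim: m => [|m IH]; first by rewrite addn0.
rewrite -addn1 iotaD rev_cat fs_cat /= IH swap_l; lia.
Qed.
Lemma fs_iota_low a m x : x < a -> fs (rev (iota a m)) x = x.
Proof. move=> h; apply: fs_low; apply/allP => k; rewrite mem_rev mem_iota; lia. Qed.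

Definition relabel (p : nat -> nat) (g : gen2) : gen2 :=
  match g with Mu a b => Mu (p a) (p b) | Ga a b => Ga (p a) (p b) end.

Lemma vdownE i j : vdown i j = map Vg (rev (iota i.+1 (j - i.+1))).
Proof. by rewrite /vdown /vup map_rev. Qed.

Section S.
Variable n : nat.

Lemma rhoV p s : rho n p (pw (map Vg s)) = [::].
Proof. elim: s p => //= k s IH p; rewrite IH /rl; by case: ifP. Qed.
Lemma stpV p s : all (valid1 n) s -> stp n p (pw (map Vg s)) = p \o fs s.
Proof.
elim: s p => [|k s IH] p /=; first by move=> _; apply: functional_extensionality.
move=> /andP [hk hs]; rewrite /stp /= /step /vl /= hk -/(stp _ _ _) IH //.
Qed.

Lemma rlV q i b : rl n q (Vg i, b) = [::].
Proof. by rewrite /rl; case: ifP. Qed.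
Lemma stp_cons p l w : stp n p (l :: w) = stp n (step n p l) w.
Proof. by []. Qed.
Lemma step_v p l : valid1 n (idx1 l.1) -> step n p l = p \o swap (idx1 l.1).
Proof. by rewrite /step /vl => ->. Qed.

Lemma pwc (G : Type) (x : G) s : pw (x :: s) = (x, false) :: pw s.
Proof. by []. Qed.
Lemma rho_cons p l w : rho n p (l :: w) = rl n p l ++ rho n (step n p l) w.
Proof. by []. Qed.

Lemma pw_cat (G : Type) (u v : seq G) : pw (u ++ v) = pw u ++ pw v.
Proof. by rewrite /pw map_cat. Qed.

Lemma all_iota_valid a b : 0 < a -> b <= n -> all (valid1 n) (iota a.+1 (b - a.+1)).
Proof. move=> ha hb; apply/allP => k; rewrite mem_iota /valid1; lia. Qed.

Lemma fus_lt_rho (X : nat -> gen1) (Y : nat -> nat -> gen2) p a b :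
  (forall q i, valid1 n i -> rl n q (X i, false) = [:: (Y (q i) (q i.+1), false)]) ->
  (forall i, idx1 (X i) = i) ->
  0 < a -> a < b -> b <= n ->
  rho n p (pw (fus_lt X a b)) = [:: (Y (p a) (p b), false)] /\ stp n p (pw (fus_lt X a b)) = p.
Proof.
move=> hX hi ha hab hb.
have hv := all_iota_valid ha hb.
have hva : valid1 n a by rewrite /valid1; lia.
rewrite /fus_lt vdownE /vup !pw_cat !rho_cat !stp_cat !rhoV stpV ?all_rev //.
rewrite !pwc !stp_cons !rho_cons !step_v ?hi // hX // !rlV /= stpV //; split.
  rewrite /= fs_iota_low // fs_iota; have -> : a.+1 + (b - a.+1) = b by lia.
  by [].
by apply: functional_extensionality => x /=; rewrite swapK fs_revK.
Qed.

Lemma fus_gt_rho (X : nat -> gen1) (Y : nat -> nat -> gen2) p a b :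
  (forall q i, valid1 n i -> rl n q (X i, false) = [:: (Y (q i) (q i.+1), false)]) ->
  (forall i, idx1 (X i) = i) ->
  0 < b -> b < a -> a <= n ->
  rho n p (pw (fus_gt X b a)) = [:: (Y (p a) (p b), false)] /\ stp n p (pw (fus_gt X b a)) = p.
Proof.
move=> hX hi ha hab hb.
have hv := all_iota_valid ha hb.
have hva : valid1 n b by rewrite /valid1; lia.
rewrite /fus_gt vdownE /vup !pw_cat !rho_cat !stp_cat !rhoV stpV ?all_rev //.
rewrite !pwc !stp_cons !rho_cons !step_v ?hi // hX // !rlV /= stpV //; split.
  rewrite /= swap_l swap_r fs_iota fs_iota_low //; have -> : b.+1 + (a - b.+1) = a by lia.
  by [].
by apply: functional_extensionality => x /=; rewrite !swapK fs_revK.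
Qed.
End S.

Section S.
Variable n : nat.

Lemma step_inv p l : step n (step n p (l.1, ~~ l.2)) l = p.
Proof.
rewrite /step /vl /=; case: (valid1 _ _) => //=.
by apply: functional_extensionality => x /=; rewrite swapK.
Qed.

Lemma rl_inv r l : rl n r (l.1, ~~ l.2) = winv (rl n (step n r (l.1, ~~ l.2)) l).
Proof.
case: l => g b; rewrite /rl /step /vl /=; case hv: (valid1 _ _) => //.
case: g hv => i hv; case: b => //=; rewrite ?swap_l ?swap_r //.
Qed.

Lemma rho_winv q w : rho n q (winv w) = winv (rho n (stp n q (winv w)) w).
Proof.
elim: w q => // l w IH q.
rewrite winv_cons rho_cat stp_cat IH /= cats0 /stp /= -/(stp n _ _).
set r := stp n q (winv w).
rewrite step_inv winv_cat; congr (_ ++ _); exact: rl_inv.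
Qed.

Lemma stp_winv q w : (forall r, stp n r w = r) -> stp n q (winv w) = q.
Proof.
move=> h.
suff H : forall r, stp n (stp n r (winv w)) w = r by rewrite -[LHS]h H.
elim: w {h} => // l w IH r.
rewrite winv_cons stp_cat /= /stp /= -/(stp n _ _) step_inv; exact: IH.
Qed.

Lemma fusing_rho p g : valid2 n g ->
  rho n p (pw (fusing g)) = [:: (relabel p g, false)] /\ stp n p (pw (fusing g)) = p.
Proof.
have hS : forall q i, valid1 n i -> rl n q (Sg i, false) = [:: (Mu (q i) (q i.+1), false)].
  by move=> q i h; rewrite /rl /vl /= h.
have hT : forall q i, valid1 n i -> rl n q (Tg i, false) = [:: (Ga (q i) (q i.+1), false)].
  by move=> q i h; rewrite /rl /vl /= h.
case: g => a b /and5P [ha1 ha2 hb1 hb2 hab] /=; case: ltnP => h.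
- exact: fus_lt_rho.
- apply: fus_gt_rho => //; lia.
- exact: fus_lt_rho.
- apply: fus_gt_rho => //; lia.
Qed.

Lemma ev_rho p u : wf2 n u ->
  rho n p (ev u) = map (fun l => (relabel p l.1, l.2)) u /\ stp n p (ev u) = p.
Proof.
elim: u p => // -[g b] u IH p /= /andP [hg hu].
have [h1 h2] := fusing_rho p hg.
rewrite -/(ev u) rho_cat stp_cat; rewrite /ev_letter /=.
case: b => /=.
- rewrite rho_winv !stp_winv //; last by move=> r; case: (fusing_rho r hg).
  rewrite h1 /=; have [-> ->] := IH p hu; by [].
- rewrite h1 h2; have [-> ->] := IH p hu; by [].
Qed.

Lemma relabel_id g : relabel id g = g.
Proof. by case: g. Qed.

Lemma ev_rho_id u : wf2 n u -> rho n id (ev u) = u.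
Proof.
move=> h; have [-> _] := ev_rho id h.
by elim: u {h} => //= -[g b] u ->; rewrite relabel_id.
Qed.

Lemma piw_cat u v x : piw (u ++ v) x = piw u (piw v x).
Proof. by elim: u => //= l u IH; rewrite IH. Qed.
Lemma piw_winv w x : piw (winv w) (piw w x) = x.
Proof.
elim: w x => //= l w IH x; rewrite winv_cons piw_cat /= swapK; exact: IH.
Qed.
Lemma piwE w x : piw w x = fs (map (fun l => idx1 l.1) w) x.
Proof. by elim: w => //= l w ->. Qed.

Lemma piw_fusing g x : piw (pw (fusing g)) x = x.
Proof.
rewrite piwE; case: g => a b /=; case: ifP => _;
  rewrite /fus_lt /fus_gt vdownE /vup /pw !map_cat !fs_cat -!map_comp /= ?swapK;
  rewrite map_rev (eq_map (g := id)) // map_id fs_revK //.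
Qed.

Lemma ev_ker u : in_ker (ev u).
Proof.
elim: u => [|[g b] u IH] x //=.
rewrite piw_cat IH /ev_letter /=; case: b; last exact: piw_fusing.
by rewrite -{1}(piw_fusing g x) piw_winv.
Qed.
End S.

Definition fusX (X : nat -> gen1) a b := if a < b then fus_lt X a b else fus_gt X b a.

Lemma fus_lt_rec X a b : a < b -> fus_lt X a b.+1 = [:: Vg b] ++ fus_lt X a b ++ [:: Vg b].
Proof.
move=> h; rewrite /fus_lt /vdown /vup.
have -> : b.+1 - a.+1 = (b - a.+1) + 1 by lia.
rewrite iotaD map_cat rev_cat /=; have -> : a.+1 + (b - a.+1) = b by lia.
by rewrite -?catA /= -?catA.
Qed.
Lemma fus_gt_rec X b a : b < a -> fus_gt X b a.+1 = [:: Vg a] ++ fus_gt X b a ++ [:: Vg a].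
Proof.
move=> h; rewrite /fus_gt /vdown /vup.
have -> : a.+1 - b.+1 = (a - b.+1) + 1 by lia.
rewrite iotaD map_cat rev_cat /=; have -> : b.+1 + (a - b.+1) = a by lia.
by rewrite -?catA /= -?catA.
Qed.
Lemma fus_lt_base X a : fus_lt X a a.+1 = [:: X a; Vg a].
Proof. by rewrite /fus_lt /vdown /vup subnn. Qed.
Lemma fus_gt_base X b : fus_gt X b b.+1 = [:: Vg b; X b; Vg b; Vg b].
Proof. by rewrite /fus_gt /vdown /vup subnn. Qed.

Lemma fus_lt_idx X a b : (forall i, idx1 (X i) = i) -> a < b ->
  all (fun h => a <= idx1 h < b) (fus_lt X a b).
Proof.
move=> hX; elim: b => // b IH h.
case: (ltngtP a b) => [hab||->]; last by rewrite fus_lt_base /= hX; apply/and3P; split; lia.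
  2: lia.
have HF : all (fun h0 => a <= idx1 h0 < b.+1) (fus_lt X a b) by apply: (sub_all _ (IH hab)) => h' /=; lia.
rewrite fus_lt_rec //; move: HF; set F := fus_lt X a b => HF; clearbody F; rewrite !all_cat HF /=; lia.
Qed.
Lemma fus_gt_idx X b a : (forall i, idx1 (X i) = i) -> b < a ->
  all (fun h => b <= idx1 h < a) (fus_gt X b a).
Proof.
move=> hX; elim: a => // a IH h.
case: (ltngtP b a) => [hab||->]; last by rewrite fus_gt_base /= hX; apply/and5P; split; lia.
  2: lia.
have HF : all (fun h0 => b <= idx1 h0 < a.+1) (fus_gt X b a) by apply: (sub_all _ (IH hab)) => h' /=; lia.
rewrite fus_gt_rec //; move: HF; set F := fus_gt X b a => HF; clearbody F; rewrite !all_cat HF /=; lia.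
Qed.

Section S.
Variable n : nat.
Definition E (u v : seq gen1) := cong (rel1 n) (pw u) (pw v).
Arguments E : simpl never.

Lemma Erefl u : E u u. Proof. exact: cong_refl. Qed.
Lemma ES u v : E u v -> E v u. Proof. exact: cong_sym. Qed.
Lemma ET u v w : E u v -> E v w -> E u w. Proof. exact: cong_trans. Qed.
Lemma EX a u v b : E u v -> E (a ++ u ++ b) (a ++ v ++ b).
Proof. by move=> h; rewrite /E !pw_cat; apply: cX. Qed.
Lemma EX' a u v b w1 w2 : w1 = a ++ u ++ b -> w2 = a ++ v ++ b -> E u v -> E w1 w2.
Proof. by move=> -> -> /EX. Qed.

Lemma Evv i : valid1 n i -> E [:: Vg i; Vg i] [::].
Proof. by move=> h; apply: cong_rel; apply: r1_vv. Qed.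
Lemma Evv' i : valid1 n i -> E [::] [:: Vg i; Vg i].
Proof. by move=> h; apply/ES/Evv. Qed.
Lemma Evvv i : valid1 n i -> valid1 n i.+1 -> E [:: Vg i; Vg i.+1; Vg i] [:: Vg i.+1; Vg i; Vg i.+1].
Proof. by move=> h h'; apply: cong_rel; apply: r1_vvv => //; rewrite /adj eqxx. Qed.
Lemma Efar g h : valid1 n (idx1 g) -> valid1 n (idx1 h) -> far (idx1 g) (idx1 h) -> E [:: g; h] [:: h; g].
Proof. by move=> h1 h2 h3; apply: cong_rel; apply: r1_far. Qed.

Variable X : nat -> gen1.
Hypothesis XP : X = Sg \/ X = Tg.
Lemma hXi i : idx1 (X i) = i. Proof. by case: XP => ->. Qed.

Lemma EvXv i : valid1 n i -> valid1 n i.+1 -> E [:: Vg i; X i.+1; Vg i] [:: Vg i.+1; X i; Vg i.+1].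
Proof.
move=> h h'; apply: cong_rel; case: XP => ->;
 [apply: r1_vsv | apply: r1_vtv] => //; by rewrite /adj eqxx.
Qed.

Lemma Ecomm k w lo hi : 0 < lo -> hi <= n -> all (fun h => lo <= idx1 h < hi) w ->
  (k.+1 < lo \/ hi < k) -> valid1 n k -> E (Vg k :: w) (w ++ [:: Vg k]).
Proof.
move=> h1 h2 hw hk hv; elim: w hw => [|g w IH] /=; first by move=> _; exact: Erefl.
move=> /andP [hg hw].
apply: (ET (v := [:: g] ++ (Vg k :: w))).
  apply: (EX' (a := [::]) (u := [:: Vg k; g]) (v := [:: g; Vg k]) (b := w)) => //.
  apply: Efar => //=; rewrite /valid1 /far; lia.
apply: (EX' (a := [:: g]) (u := Vg k :: w) (v := w ++ [:: Vg k]) (b := [::])); rewrite ?cats0 //.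
exact: IH.
Qed.

Lemma Econs i : valid1 n i -> valid1 n i.+1 ->
  E [:: Vg i; X i.+1; Vg i.+1; Vg i] [:: Vg i.+1; X i; Vg i; Vg i.+1].
Proof.
move=> h h'.
apply: (ET (v := [:: Vg i; X i.+1; Vg i] ++ [:: Vg i; Vg i.+1; Vg i])).
  apply: (EX' (a := [:: Vg i; X i.+1]) (u := [::]) (v := [:: Vg i; Vg i]) (b := [:: Vg i.+1; Vg i])) => //.
  exact: Evv'.
apply: (ET (v := [:: Vg i.+1; X i; Vg i.+1] ++ [:: Vg i; Vg i.+1; Vg i])).
  apply: (EX' (a := [::]) (u := [:: Vg i; X i.+1; Vg i]) (v := [:: Vg i.+1; X i; Vg i.+1]) (b := [:: Vg i; Vg i.+1; Vg i])) => //; exact: EvXv.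
apply: (ET (v := [:: Vg i.+1; X i; Vg i.+1] ++ [:: Vg i.+1; Vg i; Vg i.+1])).
  apply: (EX' (a := [:: Vg i.+1; X i; Vg i.+1]) (b := [::])); rewrite ?cats0 //; exact: Evvv.
apply: (EX' (a := [:: Vg i.+1; X i]) (u := [:: Vg i.+1; Vg i.+1]) (v := [::]) (b := [:: Vg i; Vg i.+1])) => //.
exact: Evv.
Qed.
End S.

Ltac fx := rewrite /fusX; case: ltnP => ?; try (exfalso; lia).
Ltac ctx A U V B := apply: (EX' (a := A) (u := U) (v := V) (b := B));
  [by rewrite /= ?cats0 -?catA /= -?catA ?cats0 | by rewrite /= ?cats0 -?catA /= -?catA ?cats0 | ].
Ltac via W := apply: (ET (v := W)).

Section S.
Variable n : nat.
Variable X : nat -> gen1.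
Hypothesis XP : X = Sg \/ X = Tg.
Local Notation E := (E n).

Lemma vld i : 0 < i -> i.+1 <= n -> valid1 n i.
Proof. rewrite /valid1; lia. Qed.

Lemma LT b : forall a k, 0 < a -> a < b -> b <= n -> valid1 n k ->
  E ([:: Vg k] ++ fus_lt X a b ++ [:: Vg k]) (fusX X (swap k a) (swap k b)).
Proof.
elim: b => [|b IH] a k ha hab hb hk; first lia.
have hk' : 0 < k < n by move: hk; rewrite /valid1.
case: (ltngtP a b) => [hlt | hgt | heq]; [ | lia | ].
2: { subst b; rewrite fus_lt_base.
  have [->|hk1] := eqVneq k a.
    sw; fx; rewrite fus_gt_base; exact: Erefl.
  have [->|hk2] := eqVneq k a.+1.
    sw; fx; rewrite fus_lt_rec // fus_lt_base; exact: Erefl.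
  have [hk3|hk3] := eqVneq k.+1 a.
    subst a; sw; fx; rewrite fus_lt_rec // fus_lt_base.
    apply: Econs => //; apply: vld; lia.
  sw; fx; rewrite fus_lt_base.
  via ([:: X a; Vg a] ++ [:: Vg k; Vg k]).
    ctx ([::] : seq gen1) [:: Vg k; X a; Vg a] [:: X a; Vg a; Vg k] [:: Vg k].
    apply: (Ecomm (lo := a) (hi := a.+1)) => //=; rewrite ?hXi //; try lia.
  ctx [:: X a; Vg a] [:: Vg k; Vg k] ([::] : seq gen1) ([::] : seq gen1).
  exact: Evv. }
have hvb : valid1 n b by apply: vld; lia.
rewrite fus_lt_rec //.
have [->|hkb] := eqVneq k b.
  sw; fx.
  via ([::] ++ fus_lt X a b ++ [:: Vg b; Vg b]).
    ctx ([::] : seq gen1) [:: Vg b; Vg b] ([::] : seq gen1) (fus_lt X a b ++ [:: Vg b; Vg b]).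
    exact: Evv.
  via (fus_lt X a b ++ [::] ++ [::]).
    ctx (fus_lt X a b) [:: Vg b; Vg b] ([::] : seq gen1) ([::] : seq gen1).
    exact: Evv.
  rewrite !cats0; exact: Erefl.
have [->|hkb1] := eqVneq k b.+1.
  sw; fx; rewrite (@fus_lt_rec _ a b.+1) // fus_lt_rec //; exact: Erefl.
have [hk2|hk2] := eqVneq k.+1 b.
  subst b.
  have [hak|hak] := eqVneq a k.
    subst a; sw; fx; rewrite !fus_lt_base.
    have hvk1 : valid1 n k.+1 by apply: vld; lia.
    via ([:: Vg k] ++ [:: Vg k; X k.+1; Vg k.+1; Vg k] ++ [:: Vg k]).
      ctx [:: Vg k] [:: Vg k.+1; X k; Vg k; Vg k.+1] [:: Vg k; X k.+1; Vg k.+1; Vg k] [:: Vg k].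
      apply: ES; exact: Econs.
    via ([::] ++ [:: X k.+1; Vg k.+1; Vg k] ++ [:: Vg k]).
      ctx ([::] : seq gen1) [:: Vg k; Vg k] ([::] : seq gen1) [:: X k.+1; Vg k.+1; Vg k; Vg k].
      exact: Evv.
    ctx [:: X k.+1; Vg k.+1] [:: Vg k; Vg k] ([::] : seq gen1) ([::] : seq gen1).
    exact: Evv.
  have hak2 : a < k by lia.
  sw; fx.
  have hvk1 : valid1 n k.+1 by apply: vld; lia.
  rewrite (@fus_lt_rec _ a k.+1) // !(@fus_lt_rec _ a k) //.
  set F := fus_lt X a k.
  via ([:: Vg k.+1; Vg k; Vg k.+1] ++ F ++ [:: Vg k; Vg k.+1; Vg k]).
    ctx ([::] : seq gen1) [:: Vg k; Vg k.+1; Vg k] [:: Vg k.+1; Vg k; Vg k.+1] (F ++ [:: Vg k; Vg k.+1; Vg k]).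
    exact: Evvv.
  via ([:: Vg k.+1; Vg k; Vg k.+1] ++ F ++ [:: Vg k.+1; Vg k; Vg k.+1]).
    ctx ([:: Vg k.+1; Vg k; Vg k.+1] ++ F) [:: Vg k; Vg k.+1; Vg k] [:: Vg k.+1; Vg k; Vg k.+1] ([::] : seq gen1).
    exact: Evvv.
  via ([:: Vg k.+1; Vg k] ++ (F ++ [:: Vg k.+1]) ++ [:: Vg k.+1; Vg k; Vg k.+1]).
    ctx [:: Vg k.+1; Vg k] (Vg k.+1 :: F) (F ++ [:: Vg k.+1]) [:: Vg k.+1; Vg k; Vg k.+1].
    apply: (Ecomm (lo := a) (hi := k)) => //; try lia; try (by right; lia); try exact: (fus_lt_idx (hXi XP) hak2).
  ctx ([:: Vg k.+1; Vg k] ++ F) [:: Vg k.+1; Vg k.+1] ([::] : seq gen1) [:: Vg k; Vg k.+1].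
  exact: Evv.
have hfar : far k b by rewrite /far; lia.
have hvk : valid1 n k by [].
have ha' : 0 < swap k a < b by rewrite /swap; swsimp2; lia.
have -> : swap k b.+1 = b.+1 by sw.
have hsb : swap k b = b by sw.
set a' := swap k a in ha' *.
rewrite /fusX ifT; last by lia.
rewrite fus_lt_rec; last by lia.
set F := fus_lt X a b.
via ([:: Vg b] ++ ([:: Vg k] ++ F ++ [:: Vg k]) ++ [:: Vg b]).
  via ([:: Vg b] ++ [:: Vg k] ++ F ++ [:: Vg b; Vg k]).
    ctx ([::] : seq gen1) [:: Vg k; Vg b] [:: Vg b; Vg k] (F ++ [:: Vg b; Vg k]).
    exact: Efar.
  ctx ([:: Vg b; Vg k] ++ F) [:: Vg b; Vg k] [:: Vg k; Vg b] ([::] : seq gen1).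
  apply: Efar => //; move: hfar; rewrite /far /=; lia.
ctx [:: Vg b] ([:: Vg k] ++ F ++ [:: Vg k]) (fus_lt X a' b) [:: Vg b].
have := IH a k ha hlt (ltnW hb) hk; rewrite hsb /fusX ifT //; lia.
Qed.
Lemma GT a : forall b k, 0 < b -> b < a -> a <= n -> valid1 n k ->
  E ([:: Vg k] ++ fus_gt X b a ++ [:: Vg k]) (fusX X (swap k a) (swap k b)).
Proof.
elim: a => [|a IH] b k hb hba ha hk; first lia.
have hk' : 0 < k < n by move: hk; rewrite /valid1.
case: (ltngtP b a) => [hlt | hgt | heq]; [ | lia | ].
2: { subst a; rewrite fus_gt_base.
  have hvb : valid1 n b by apply: vld; lia.
  have [->|hk1] := eqVneq k b.
    sw; fx; rewrite fus_lt_base.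
    via ([::] ++ [:: X b; Vg b; Vg b; Vg b]).
      ctx ([::] : seq gen1) [:: Vg b; Vg b] ([::] : seq gen1) [:: X b; Vg b; Vg b; Vg b].
      exact: Evv.
    ctx [:: X b; Vg b] [:: Vg b; Vg b] ([::] : seq gen1) ([::] : seq gen1).
    exact: Evv.
  have [->|hk2] := eqVneq k b.+1.
    sw; fx; rewrite (@fus_gt_rec _ b b.+1) // fus_gt_base; exact: Erefl.
  have [hk3|hk3] := eqVneq k.+1 b.
    subst b; sw; fx; rewrite fus_gt_rec // fus_gt_base.
    have hvk1 : valid1 n k.+1 by [].
    via ([:: Vg k; Vg k.+1] ++ [:: Vg k; Vg k] ++ [:: X k.+1; Vg k.+1; Vg k.+1; Vg k]).
      ctx [:: Vg k; Vg k.+1] ([::] : seq gen1) [:: Vg k; Vg k] [:: X k.+1; Vg k.+1; Vg k.+1; Vg k].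
      exact: Evv'.
    via ([:: Vg k; Vg k.+1; Vg k; Vg k; X k.+1; Vg k.+1] ++ [:: Vg k; Vg k] ++ [:: Vg k.+1; Vg k]).
      ctx [:: Vg k; Vg k.+1; Vg k; Vg k; X k.+1; Vg k.+1] ([::] : seq gen1) [:: Vg k; Vg k] [:: Vg k.+1; Vg k].
      exact: Evv'.
    via ([:: Vg k.+1; Vg k; Vg k.+1] ++ [:: Vg k; X k.+1; Vg k.+1; Vg k; Vg k; Vg k.+1; Vg k]).
      ctx ([::] : seq gen1) [:: Vg k; Vg k.+1; Vg k] [:: Vg k.+1; Vg k; Vg k.+1] [:: Vg k; X k.+1; Vg k.+1; Vg k; Vg k; Vg k.+1; Vg k].
      exact: Evvv.
    via ([:: Vg k.+1; Vg k; Vg k.+1; Vg k; X k.+1; Vg k.+1; Vg k] ++ [:: Vg k.+1; Vg k; Vg k.+1]).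
      ctx [:: Vg k.+1; Vg k; Vg k.+1; Vg k; X k.+1; Vg k.+1; Vg k] [:: Vg k; Vg k.+1; Vg k] [:: Vg k.+1; Vg k; Vg k.+1] ([::] : seq gen1).
      exact: Evvv.
    via ([:: Vg k.+1; Vg k; Vg k.+1] ++ [:: Vg k.+1; X k; Vg k; Vg k.+1] ++ [:: Vg k.+1; Vg k; Vg k.+1]).
      ctx [:: Vg k.+1; Vg k; Vg k.+1] [:: Vg k; X k.+1; Vg k.+1; Vg k] [:: Vg k.+1; X k; Vg k; Vg k.+1] [:: Vg k.+1; Vg k; Vg k.+1].
      exact: Econs.
    via ([:: Vg k.+1; Vg k] ++ [::] ++ [:: X k; Vg k; Vg k.+1; Vg k.+1; Vg k; Vg k.+1]).
      ctx [:: Vg k.+1; Vg k] [:: Vg k.+1; Vg k.+1] ([::] : seq gen1) [:: X k; Vg k; Vg k.+1; Vg k.+1; Vg k; Vg k.+1].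
      exact: Evv.
    ctx [:: Vg k.+1; Vg k; X k; Vg k] [:: Vg k.+1; Vg k.+1] ([::] : seq gen1) [:: Vg k; Vg k.+1].
    exact: Evv.
  sw; fx; rewrite fus_gt_base.
  via ([:: Vg b; X b; Vg b; Vg b] ++ [:: Vg k; Vg k]).
    ctx ([::] : seq gen1) [:: Vg k; Vg b; X b; Vg b; Vg b] [:: Vg b; X b; Vg b; Vg b; Vg k] [:: Vg k].
    apply: (Ecomm (lo := b) (hi := b.+1)) => //=; rewrite ?hXi //; lia.
  ctx [:: Vg b; X b; Vg b; Vg b] [:: Vg k; Vg k] ([::] : seq gen1) ([::] : seq gen1).
  exact: Evv. }
have hva : valid1 n a by apply: vld; lia.
rewrite fus_gt_rec //.
have [->|hka] := eqVneq k a.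
  sw; fx.
  via ([::] ++ fus_gt X b a ++ [:: Vg a; Vg a]).
    ctx ([::] : seq gen1) [:: Vg a; Vg a] ([::] : seq gen1) (fus_gt X b a ++ [:: Vg a; Vg a]).
    exact: Evv.
  via (fus_gt X b a ++ [::] ++ [::]).
    ctx (fus_gt X b a) [:: Vg a; Vg a] ([::] : seq gen1) ([::] : seq gen1).
    exact: Evv.
  rewrite !cats0; exact: Erefl.
have [->|hka1] := eqVneq k a.+1.
  sw; fx; rewrite (@fus_gt_rec _ b a.+1) // fus_gt_rec //; exact: Erefl.
have [hk2|hk2] := eqVneq k.+1 a.
  subst a.
  have hvk1 : valid1 n k.+1 by apply: vld; lia.
  have [hbk|hbk] := eqVneq b k.
    subst b; sw; fx; rewrite !fus_gt_base.
    via ([:: Vg k.+1; Vg k; Vg k.+1] ++ [:: X k; Vg k; Vg k; Vg k.+1; Vg k]).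
      ctx ([::] : seq gen1) [:: Vg k; Vg k.+1; Vg k] [:: Vg k.+1; Vg k; Vg k.+1] [:: X k; Vg k; Vg k; Vg k.+1; Vg k].
      exact: Evvv.
    via ([:: Vg k.+1; Vg k; Vg k.+1; X k; Vg k] ++ [:: Vg k.+1; Vg k; Vg k.+1]).
      ctx [:: Vg k.+1; Vg k; Vg k.+1; X k; Vg k] [:: Vg k; Vg k.+1; Vg k] [:: Vg k.+1; Vg k; Vg k.+1] ([::] : seq gen1).
      exact: Evvv.
    via ([:: Vg k.+1; Vg k] ++ [:: Vg k; X k.+1; Vg k.+1; Vg k] ++ [:: Vg k; Vg k.+1]).
      ctx [:: Vg k.+1; Vg k] [:: Vg k.+1; X k; Vg k; Vg k.+1] [:: Vg k; X k.+1; Vg k.+1; Vg k] [:: Vg k; Vg k.+1].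
      apply: ES; exact: Econs.
    via ([:: Vg k.+1] ++ [::] ++ [:: X k.+1; Vg k.+1; Vg k; Vg k; Vg k.+1]).
      ctx [:: Vg k.+1] [:: Vg k; Vg k] ([::] : seq gen1) [:: X k.+1; Vg k.+1; Vg k; Vg k; Vg k.+1].
      exact: Evv.
    ctx [:: Vg k.+1; X k.+1; Vg k.+1] [:: Vg k; Vg k] ([::] : seq gen1) [:: Vg k.+1].
    exact: Evv.
  have hbk2 : b < k by lia.
  sw; fx.
  rewrite (@fus_gt_rec _ b k.+1) // !(@fus_gt_rec _ b k) //.
  set F := fus_gt X b k.
  via ([:: Vg k.+1; Vg k; Vg k.+1] ++ F ++ [:: Vg k; Vg k.+1; Vg k]).
    ctx ([::] : seq gen1) [:: Vg k; Vg k.+1; Vg k] [:: Vg k.+1; Vg k; Vg k.+1] (F ++ [:: Vg k; Vg k.+1; Vg k]).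
    exact: Evvv.
  via ([:: Vg k.+1; Vg k; Vg k.+1] ++ F ++ [:: Vg k.+1; Vg k; Vg k.+1]).
    ctx ([:: Vg k.+1; Vg k; Vg k.+1] ++ F) [:: Vg k; Vg k.+1; Vg k] [:: Vg k.+1; Vg k; Vg k.+1] ([::] : seq gen1).
    exact: Evvv.
  via ([:: Vg k.+1; Vg k] ++ (F ++ [:: Vg k.+1]) ++ [:: Vg k.+1; Vg k; Vg k.+1]).
    ctx [:: Vg k.+1; Vg k] (Vg k.+1 :: F) (F ++ [:: Vg k.+1]) [:: Vg k.+1; Vg k; Vg k.+1].
    apply: (Ecomm (lo := b) (hi := k)) => //; try lia; try (by right; lia); try exact: (fus_gt_idx (hXi XP) hbk2).
  ctx ([:: Vg k.+1; Vg k] ++ F) [:: Vg k.+1; Vg k.+1] ([::] : seq gen1) [:: Vg k; Vg k.+1].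
  exact: Evv.
have hfar : far k a by rewrite /far; lia.
have hb' : 0 < swap k b < a by rewrite /swap; swsimp2; lia.
have -> : swap k a.+1 = a.+1 by sw.
have hsa : swap k a = a by sw.
set b' := swap k b in hb' *.
rewrite /fusX ifF; last by apply/negbTE; rewrite -leqNgt; lia.
rewrite fus_gt_rec; last by lia.
set F := fus_gt X b a.
via ([:: Vg a] ++ ([:: Vg k] ++ F ++ [:: Vg k]) ++ [:: Vg a]).
  via ([:: Vg a] ++ [:: Vg k] ++ F ++ [:: Vg a; Vg k]).
    ctx ([::] : seq gen1) [:: Vg k; Vg a] [:: Vg a; Vg k] (F ++ [:: Vg a; Vg k]).
    exact: Efar.
  ctx ([:: Vg a; Vg k] ++ F) [:: Vg a; Vg k] [:: Vg k; Vg a] ([::] : seq gen1).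
  apply: Efar => //; move: hfar; rewrite /far /=; lia.
ctx [:: Vg a] ([:: Vg k] ++ F ++ [:: Vg k]) (fus_gt X b' a) [:: Vg a].
have := IH b k hb hlt (ltnW ha) hk; rewrite hsa /fusX ifF //; apply/negbTE; rewrite -leqNgt; lia.
Qed.

Lemma CJ1 a b k : 0 < a -> a <= n -> 0 < b -> b <= n -> a != b -> valid1 n k ->
  E ([:: Vg k] ++ fusX X a b ++ [:: Vg k]) (fusX X (swap k a) (swap k b)).
Proof.
move=> h1 h2 h3 h4 h5 hk; rewrite {1}/fusX; case: ltnP => h.
  exact: LT.
apply: GT => //; lia.
Qed.
End S.

Ltac cctx A U V B := apply: (cX' (a := A) (u := U) (v := V) (b := B));
  [by rewrite /= -?catA /= -?catA | by rewrite /= -?catA /= -?catA | ].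
Ltac cvia W := apply: (cT (v := W)).

Definition vw (l : gen1 * bool) : gen1 * bool := (Vg (idx1 l.1), false).
Definition VW (s : seq nat) : word gen1 := pw (map Vg s).

Lemma fusingE g : fusing g = match g with Mu a b => fusX Sg a b | Ga a b => fusX Tg a b end.
Proof. by case: g. Qed.

Section S.
Variable n : nat.
Local Notation C := (cong (rel1 n)).

Lemma Vinv k : valid1 n k -> C [:: (Vg k, true)] [:: (Vg k, false)].
Proof.
move=> hk.
cvia ([:: (Vg k, true)] ++ [:: (Vg k, false); (Vg k, false)]).
  cctx [:: (Vg k, true)] ([::] : word gen1) [:: (Vg k, false); (Vg k, false)] ([::] : word gen1).
  apply: cong_sym; apply: cong_rel; exact: r1_vv.
cctx ([::] : word gen1) [:: (Vg k, true); (Vg k, false)] ([::] : word gen1) [:: (Vg k, false)].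
exact: (cong_free _ (Vg k) true).
Qed.

Lemma fs_gd s : all (valid1 n) s -> gd n (fs s).
Proof.
elim: s => [|k s IH] /=; first by split => // x y.
move=> /andP [hk hs]; have [h1 h2] := IH hs; split.
  move=> x hx /=; have := h1 x hx; move: hk; rewrite /valid1 /valid_ix; swsimp2; lia.
by move=> x y /= /swap_inj /h2.
Qed.

Lemma valid2_relabel p g : gd n p -> valid2 n g -> valid2 n (relabel p g).
Proof.
move=> [h1 h2]; case: g => a b /and5P [ha1 ha2 hb1 hb2 hab] /=;
  have := h1 a; have := h1 b; rewrite /valid_ix ha1 ha2 hb1 hb2 /= => /(_ isT) /andP [-> ->] /(_ isT) /andP [-> ->];
  by rewrite (inj_eq h2).
Qed.

Lemma CJ s g : all (valid1 n) s -> valid2 n g ->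
  C (VW s ++ pw (fusing g) ++ winv (VW s)) (pw (fusing (relabel (fs s) g))).
Proof.
elim: s g => [|k s IH] g.
  move=> _ _ /=; rewrite cats0; case: g => a b; exact: cong_refl.
move=> /= /andP [hk hs] hg.
have hg' := valid2_relabel (fs_gd hs) hg.
rewrite /VW /= winv_cons /= -/(VW s).
cvia ([:: (Vg k, false)] ++ pw (fusing (relabel (fs s) g)) ++ [:: (Vg k, true)]).
  cctx [:: (Vg k, false)] (VW s ++ pw (fusing g) ++ winv (VW s)) (pw (fusing (relabel (fs s) g))) [:: (Vg k, true)].
  exact: IH.
cvia ([:: (Vg k, false)] ++ pw (fusing (relabel (fs s) g)) ++ [:: (Vg k, false)]).
  cctx ([:: (Vg k, false)] ++ pw (fusing (relabel (fs s) g))) [:: (Vg k, true)] [:: (Vg k, false)] ([::] : word gen1).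
  exact: Vinv.
have -> : relabel (fs (k :: s)) g = relabel (swap k) (relabel (fs s) g) by case: g {hg hg'}.
move: hg'; case: (relabel (fs s) g) => a b /and5P [ha1 ha2 hb1 hb2 hab] /=.
- have := CJ1 (X := Sg) (or_introl erefl) ha1 ha2 hb1 hb2 hab hk.
  by rewrite /E /fusX !pw_cat.
- have := CJ1 (X := Tg) (or_intror erefl) ha1 ha2 hb1 hb2 hab hk.
  by rewrite /E /fusX !pw_cat.
Qed.

Lemma fs_rcons s i x : fs (rcons s i) x = fs s (swap i x).
Proof. by rewrite -cats1 fs_cat. Qed.

Lemma ev1 g : ev [:: (g, false)] = pw (fusing g).
Proof. by rewrite /ev /= cats0. Qed.
Lemma ev1' g : ev [:: (g, true)] = winv (pw (fusing g)).
Proof. by rewrite /ev /= cats0. Qed.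
Lemma ev_cat u v : ev (u ++ v) = ev u ++ ev v.
Proof. by rewrite /ev map_cat flatten_cat. Qed.

Section X.
Variables (X : nat -> gen1) (G : nat -> nat -> gen2).
Hypothesis hF : forall a b, fusing (G a b) = fusX X a b.
Hypothesis hR : forall p a b, relabel p (G a b) = G (p a) (p b).
Hypothesis hV : forall a b, valid2 n (G a b) = [&& 0 < a, a <= n, 0 < b, b <= n & a != b].

Lemma SLX s i : all (valid1 n) s -> valid1 n i ->
  C (VW s ++ [:: (X i, false)]) (ev [:: (G (fs s i) (fs s i.+1), false)] ++ VW s ++ [:: (Vg i, false)]) /\
  C (VW s ++ [:: (X i, true)]) (ev [:: (G (fs s i.+1) (fs s i), true)] ++ VW s ++ [:: (Vg i, false)]).
Proof.
move=> hs hi.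
have hM : pw (fusing (G i i.+1)) = [:: (X i, false); (Vg i, false)] by rewrite hF /fusX ltnSn fus_lt_base.
have hg : valid2 n (G i i.+1) by rewrite hV; move: hi; rewrite /valid1; lia.
split.
- have := CJ hs hg; rewrite hM hR ev1 => hC.
  cvia (VW s ++ [:: (X i, false); (Vg i, false)] ++ [:: (Vg i, false)]).
    cctx (VW s ++ [:: (X i, false)]) ([::] : word gen1) [:: (Vg i, false); (Vg i, false)] ([::] : word gen1).
    apply: cong_sym; apply: cong_rel; exact: r1_vv.
  cvia ((VW s ++ [:: (X i, false); (Vg i, false)] ++ winv (VW s)) ++ VW s ++ [:: (Vg i, false)]).
    cctx (VW s ++ [:: (X i, false); (Vg i, false)]) ([::] : word gen1) (winv (VW s) ++ VW s) [:: (Vg i, false)].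
    apply: cong_sym; exact: winv_l.
  cctx ([::] : word gen1) (VW s ++ [:: (X i, false); (Vg i, false)] ++ winv (VW s)) (pw (fusing (G (fs s i) (fs s i.+1)))) (VW s ++ [:: (Vg i, false)]).
  exact: hC.
- have hs' : all (valid1 n) (rcons s i) by rewrite all_rcons hi hs.
  have := CJ hs' hg; rewrite hM hR ev1' !fs_rcons swap_l swap_r => hC.
  have hVW : VW (rcons s i) = VW s ++ [:: (Vg i, false)] by rewrite /VW map_rcons /pw map_rcons cats1.
  rewrite hVW in hC.
  set S' := VW s ++ [:: (Vg i, false)] in hC *.
  cvia (VW s ++ [:: (Vg i, false); (Vg i, true)] ++ [:: (X i, true)]).
    cctx (VW s) ([::] : word gen1) [:: (Vg i, false); (Vg i, true)] [:: (X i, true)].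
    apply: cong_sym; exact: (cong_free _ (Vg i) false).
  cvia ((S' ++ [:: (Vg i, true); (X i, true)] ++ winv S') ++ S').
    cctx (S' ++ [:: (Vg i, true); (X i, true)]) ([::] : word gen1) (winv S' ++ S') ([::] : word gen1).
    apply: cong_sym; exact: winv_l.
  cctx ([::] : word gen1) (S' ++ [:: (Vg i, true); (X i, true)] ++ winv S') (winv (pw (fusing (G (fs s i.+1) (fs s i))))) S'.
  have -> : S' ++ [:: (Vg i, true); (X i, true)] ++ winv S' = winv (S' ++ [:: (X i, false); (Vg i, false)] ++ winv S').
    by rewrite !winv_cat winvK -catA.
  exact: cong_winv.
Qed.
End X.

Lemma SL s l : all (valid1 n) s -> vl n l ->
  C (VW s ++ [:: l]) (ev (rl n (fs s) l) ++ VW s ++ [:: vw l]).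
Proof.
move=> hs; case: l => g b; rewrite /vl /= => hv; rewrite /rl /vl /= hv.
case: g hv => i hv /=; case: b.
- by case: (SLX (X := Sg) (G := Mu) (fun _ _ => erefl) (fun _ _ _ => erefl) (fun _ _ => erefl) hs hv).
- by case: (SLX (X := Sg) (G := Mu) (fun _ _ => erefl) (fun _ _ _ => erefl) (fun _ _ => erefl) hs hv).
- rewrite /ev /=; cctx (VW s) [:: (Vg i, true)] [:: (Vg i, false)] ([::] : word gen1); exact: Vinv.
- rewrite /ev /=; exact: cong_refl.
- by case: (SLX (X := Tg) (G := Ga) (fun _ _ => erefl) (fun _ _ _ => erefl) (fun _ _ => erefl) hs hv).
- by case: (SLX (X := Tg) (G := Ga) (fun _ _ => erefl) (fun _ _ _ => erefl) (fun _ _ => erefl) hs hv).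
Qed.

Definition idxs (w : word gen1) : seq nat := map (fun l => idx1 l.1) w.

Lemma KEY w s : wf1 n w -> all (valid1 n) s ->
  C (VW s ++ w) (ev (rho n (fs s) w) ++ VW s ++ VW (idxs w)).
Proof.
elim: w s => [|l w IH] s /=.
  by move=> _ _; rewrite /VW /= !cats0; exact: cong_refl.
move=> /andP [hl hw] hs.
have hl' : vl n l by [].
have hst : step n (fs s) l = fs (rcons s (idx1 l.1)).
  rewrite /step hl' /=; apply: functional_extensionality => x /=; by rewrite fs_rcons.
have hs' : all (valid1 n) (rcons s (idx1 l.1)) by rewrite all_rcons hl hs.
have hVW : VW (rcons s (idx1 l.1)) = VW s ++ [:: vw l] by rewrite /VW map_rcons /pw map_rcons cats1.
rewrite hst ev_cat.
cvia ((ev (rl n (fs s) l) ++ VW s ++ [:: vw l]) ++ w).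
  cctx ([::] : word gen1) (VW s ++ [:: l]) (ev (rl n (fs s) l) ++ VW s ++ [:: vw l]) w.
  exact: SL.
apply: (cX' (a := ev (rl n (fs s) l)) (u := VW (rcons s (idx1 l.1)) ++ w) (v := ev (rho n (fs (rcons s (idx1 l.1))) w) ++ VW (rcons s (idx1 l.1)) ++ VW (idxs w)) (b := [::])).
  by rewrite hVW cats0 -!catA.
  by rewrite hVW /VW /= cats0 -!catA.
exact: IH.
Qed.
End S.


Definition cr (M r : nat) : seq nat := rev (iota r (M.+1 - r)).

Lemma cr_rcons M r : r <= M -> cr M r = rcons (cr M r.+1) r.
Proof.
move=> h; rewrite /cr; have -> : M.+1 - r = (M.+1 - r.+1).+1 by lia.
by rewrite /= rev_cons.
Qed.

Lemma fs_high s x : all (fun k => k.+1 < x) s -> fs s x = x.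
Proof.
elim: s => //= k s IH /andP [hk hs]; rewrite IH // swap_o //; apply/eqP; lia.
Qed.

Section S.
Variable n : nat.
Local Notation E := (E n).

Lemma E_fs s s' : all (valid1 n) s -> all (valid1 n) s' -> E (map Vg s) (map Vg s') -> forall x, fs s x = fs s' x.
Proof.
move=> h h' /st_cong /(_ id); rewrite !stpV // => e x.
by have := congr1 (fun f => f x) e.
Qed.

Lemma NF M : 0 < M -> M < n -> forall s, all (fun k => 0 < k <= M) s ->
  exists u r, all (fun k => 0 < k < M) u /\ 0 < r <= M.+1 /\ E (map Vg s) (map Vg (u ++ cr M r)).
Proof.
move=> hM hMn s; elim/last_ind: s => [|s k IH].
  move=> _; exists [::], M.+1; split => //; split; first lia.
  by rewrite /cr subnn; exact: Erefl.
rewrite all_rcons => /andP [hk hs]; have [u [r [hu [hr he]]]] := IH hs.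
have hvk : valid1 n k by rewrite /valid1; lia.
have he' : E (map Vg (rcons s k)) (map Vg (u ++ cr M r) ++ [:: Vg k]).
  rewrite map_rcons -cats1; ctx ([::] : seq gen1) (map Vg s) (map Vg (u ++ cr M r)) [:: Vg k]; exact: he.
have hcr : all (fun x => r <= x <= M) (cr M r) by apply/allP => x; rewrite mem_rev mem_iota; lia.
case: (ltngtP k r) => hkr.
-
  have [hk1|hk1] := eqVneq k.+1 r.
  + subst r; exists u, k; split => //; split; first lia.
    apply: (ET he'); rewrite (@cr_rcons M k) ?map_cat ?map_rcons -?cats1 -?catA; [exact: Erefl|lia].
  + exists (rcons u k), r; split; first by rewrite all_rcons hu /=; lia.
    split => //; apply: (ET he'); rewrite !map_cat map_rcons -cats1 -!catA.
    ctx (map Vg u) (map Vg (cr M r) ++ [:: Vg k]) (Vg k :: map Vg (cr M r)) ([::] : seq gen1).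
    apply: ES; apply: (Ecomm (lo := r) (hi := M.+1)) => //; try lia.
    by rewrite all_map; apply: sub_all hcr => x /=; lia.
-
  have hkM : k <= M by lia.
  exists (rcons u k.-1), r; split; first by rewrite all_rcons hu /=; lia.
  split => //; apply: (ET he').
  have -> : cr M r = cr M k.+1 ++ [:: k; k.-1] ++ rev (iota r (k.-1 - r)).
    rewrite /cr; have -> : M.+1 - r = (k.-1 - r) + 2 + (M.+1 - k.+1) by lia.
    rewrite !iotaD !rev_cat /=; have -> : r + (k.-1 - r) = k.-1 by lia.
    have -> : r + (k.-1 - r + 2) = k.+1 by lia.
    by have -> : k.-1.+1 = k by lia.
  have hl : all (fun x => r <= x < k.-1) (rev (iota r (k.-1 - r))) by apply/allP => x; rewrite mem_rev mem_iota; lia.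
  have hh : all (fun x => k.+1 <= x < M.+1) (cr M k.+1) by apply/allP => x; rewrite mem_rev mem_iota; lia.
  set A := cr M k.+1 in hh *; set B := rev (iota r (k.-1 - r)) in hl *.
  have hvk1 : valid1 n k.-1 by rewrite /valid1; lia.
  have hkk : k.-1.+1 = k by lia.
  rewrite !map_cat map_rcons -cats1 ?map_cat -!catA /=.
  via (map Vg u ++ map Vg A ++ [:: Vg k; Vg k.-1; Vg k] ++ map Vg B).
    ctx (map Vg u ++ map Vg A ++ [:: Vg k; Vg k.-1]) (map Vg B ++ [:: Vg k]) (Vg k :: map Vg B) ([::] : seq gen1).
    apply: ES; apply: (Ecomm (lo := r) (hi := k.-1)) => //; try lia.
    by rewrite all_map; apply: sub_all hl => x /=; lia.
  via (map Vg u ++ map Vg A ++ [:: Vg k.-1; Vg k; Vg k.-1] ++ map Vg B).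
    ctx (map Vg u ++ map Vg A) [:: Vg k; Vg k.-1; Vg k] [:: Vg k.-1; Vg k; Vg k.-1] (map Vg B).
    have := Evvv hvk1; rewrite hkk => h; apply: ES; exact: h.
  ctx (map Vg u) (map Vg A ++ [:: Vg k.-1]) (Vg k.-1 :: map Vg A) ([:: Vg k; Vg k.-1] ++ map Vg B).
  apply: ES; apply: (Ecomm (lo := k.+1) (hi := M.+1)) => //; try lia.
  by rewrite all_map; apply: sub_all hh => x /=; lia.
-
  subst r; exists u, k.+1; split => //; split; first lia.
  apply: (ET he'); rewrite (@cr_rcons M k); last lia.
  rewrite !map_cat map_rcons -cats1 -!catA ?map_cat.
  ctx (map Vg u ++ map Vg (cr M k.+1)) [:: Vg k; Vg k] ([::] : seq gen1) ([::] : seq gen1).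
  exact: Evv.
Qed.

Lemma Cox M : M < n -> forall s, all (fun k => 0 < k <= M) s -> (forall x, fs s x = x) ->
  E (map Vg s) [::].
Proof.
elim: M => [|M IH] hM s hs hid.
  case: s hs hid => [|k s] /=; first by move=> *; exact: Erefl.
  by move=> /andP [hk _]; lia.
have [u [r [hu [hr he]]]] := NF (M := M.+1) isT hM hs.
have hvs : all (valid1 n) s by apply: sub_all hs => x; rewrite /valid1; lia.
have hvu : all (valid1 n) (u ++ cr M.+1 r).
  rewrite all_cat; apply/andP; split; first by apply: sub_all hu => x; rewrite /valid1; lia.
  by apply/allP => x; rewrite mem_rev mem_iota /valid1; lia.
have hfs := E_fs hvs hvu he.
have hr2 : r = M.+2.
  apply/eqP; rewrite eqn_leq; move/andP: hr => [_ ->]; rewrite leqNgt; apply/negP => hlt.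
  have := hfs r; rewrite hid fs_cat /cr fs_iota fs_high; last by apply: sub_all hu => x /=; lia.
  lia.
subst r; move: he; rewrite /cr subnn /= cats0 => he.
apply: (ET he); apply: IH; [lia | | ].
  by apply: sub_all hu => x /=; lia.
move=> x; have := hfs x; rewrite hid /cr subnn /= cats0 => e; by rewrite -e.
Qed.
End S.

Section S.
Variable n : nat.
Local Notation C := (cong (rel1 n)).

Lemma fs_range s L x : all (fun k => L <= k < n) s -> L <= x <= n -> L <= fs s x <= n.
Proof.
elim: s => //= k s IH /andP [hk hs] hx; have := IH hs hx.
move: hk; rewrite /swap; swsimp2; lia.
Qed.

Lemma Perm m : forall xs L, size xs = m -> 0 < L -> uniq xs -> all (fun x => L <= x <= n) xs ->
  exists s, all (fun k => L <= k < n) s /\ forall i, i < size xs -> fs s (L + i) = nth 0 xs i.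
Proof.
elim: m => [|m IH] [|c ys] L //= hsz hL.
  by move=> _ _; exists [::].
move=> /andP [hc hu] /andP [hcL hall].
set s1 := rev (iota L (c - L)).
have hs1 : all (fun k => L <= k < n) s1 by apply/allP => x; rewrite mem_rev mem_iota; lia.
have hs1' : all (fun k => L <= k < n) (rev s1) by rewrite all_rev.
have e1 : fs s1 L = c by rewrite /s1 fs_iota; lia.
have K1 x : fs s1 (fs (rev s1) x) = x by exact: fs_revK'.
have K2 x : fs (rev s1) (fs s1 x) = x by exact: fs_revK.
have inj : injective (fs (rev s1)) by move=> x y /(congr1 (fs s1)); rewrite !K1.
set ys' := map (fs (rev s1)) ys.
have hu' : uniq ys' by rewrite map_inj_uniq.
have hall' : all (fun x => L.+1 <= x <= n) ys'.
  apply/allP => y; rewrite /ys' => /mapP [x hx ->].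
  have := fs_range hs1' (x := x); move/allP: hall => /(_ x hx) hx' /(_ hx').
  have : fs (rev s1) x != L.
    apply/eqP => e; move: hc; rewrite -e1 -e K1 => /negP; apply.
    by [].
  lia.
have hsz' : size ys' = m by rewrite size_map; case: hsz.
have [s2 [hs2 hs2e]] := IH ys' L.+1 hsz' isT hu' hall'.
exists (s1 ++ s2); split.
  by rewrite all_cat hs1 /=; apply: sub_all hs2 => x /=; lia.
move=> [|i] hi.
  rewrite addn0 fs_cat (@fs_low s2 L) ?e1 //; apply: sub_all hs2 => x /=; lia.
rewrite fs_cat /= addnS -addSn hs2e; last by rewrite size_map; lia.
by rewrite /ys' (nth_map 0) ?K1 //; lia.
Qed.

Lemma rel1_wf L R : rel1 n L R -> wf1 n L /\ wf1 n R.
Proof. case => *; rewrite /wf1 /=; split; unfold valid1 in *; simpl in *; lia. Qed.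

Lemma rel1_idx L R : rel1 n L R -> C (VW (idxs L)) (VW (idxs R)).
Proof.
case => {L R}.
- by move=> i hi; apply: cong_rel; exact: r1_vv.
- by move=> *; exact: cong_refl.
- by move=> i j hi hj ha; apply: cong_rel; exact: r1_vvv.
- by move=> i j hi hj ha; apply: cong_rel; exact: r1_vvv.
- by move=> i j hi hj ha; apply: cong_rel; exact: r1_vvv.
- by move=> i j hi hj ha; apply: cong_rel; exact: r1_vvv.
- by move=> i j hi hj ha; apply: cong_rel; exact: r1_vvv.
- move=> g h hg hh hf; apply: cong_rel; exact: (r1_far (g := Vg (idx1 g)) (h := Vg (idx1 h))).
Qed.

Lemma solveB A B T : C A (B ++ T) -> C B (A ++ winv T).
Proof.
move=> h.
apply: (cT (v := B ++ T ++ winv T)).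
  apply: (cX' (a := B) (u := [::]) (v := T ++ winv T) (b := [::])); rewrite ?cats0 //.
  apply: cong_sym; exact: winv_r.
rewrite catA; apply: (cX' (a := [::]) (u := B ++ T) (v := A) (b := winv T)) => //.
exact: cong_sym.
Qed.

Lemma TR L R s : rel1 n L R -> all (valid1 n) s ->
  C (ev (rho n (fs s) L)) (ev (rho n (fs s) R)).
Proof.
move=> hr hs; have [hL hR] := rel1_wf hr.
have kL := solveB (KEY hL hs); have kR := solveB (KEY hR hs).
apply: (cT kL); apply: cong_sym; apply: (cT kR); apply: cong_sym.
apply: cong_cat.
  apply: cong_cat; [exact: cong_refl | exact: cong_rel].
apply: cong_winv; apply: cong_cat; [exact: cong_refl | exact: rel1_idx].
Qed.

Lemma rho_wf p w : gd n p -> wf2 n (rho n p w).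
Proof.
elim: w p => //= l w IH p hp; rewrite /wf2 all_cat; apply/andP; split; last exact: (IH _ (gd_step l hp)).
case: hp => h1 h2; case: l => g b; rewrite /rl /vl /=; case: ifP => // hv.
have hi : valid_ix n (idx1 g) /\ valid_ix n (idx1 g).+1 by move: hv; rewrite /valid1 /valid_ix; lia.
case: hi => /h1 hi1 /h1 hi2.
have hne : p (idx1 g) != p (idx1 g).+1 by rewrite (inj_eq h2); lia.
move: hi1 hi2 hne; rewrite /valid_ix.
case: g hv => i hv /=; case: b => /=; rewrite ?andbT => *; try lia.
Qed.
End S.

Section S.
Variable n : nat.
Local Notation C := (cong (rel1 n)).

Lemma getp xs : uniq xs -> all (valid_ix n) xs ->
  exists s, all (valid1 n) s /\ forall i, i < size xs -> fs s i.+1 = nth 0 xs i.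
Proof.
move=> hu ha.
have [s [hs he]] := Perm (m := size xs) erefl (isT : 0 < 1) hu ha.
exists s; split; first by apply: sub_all hs => x; rewrite /valid1; lia.
by move=> i hi; rewrite -he // add1n.
Qed.

Section R.
Variable p : nat -> nat.
Hypotheses (h1 : valid1 n 1) (h2 : valid1 n 2).
Lemma rho_sss : rho n p (pw [:: Sg 1; Sg 2; Sg 1]) = pw [:: Mu (p 1) (p 2); Mu (p 1) (p 3); Mu (p 2) (p 3)]
  /\ rho n p (pw [:: Sg 2; Sg 1; Sg 2]) = pw [:: Mu (p 2) (p 3); Mu (p 1) (p 3); Mu (p 1) (p 2)].
Proof. by rewrite /= /rl /step /vl /= -/(valid1 n 1) -/(valid1 n 2) h1 h2. Qed.
Lemma rho_sst12 : rho n p (pw [:: Sg 1; Sg 2; Tg 1]) = pw [:: Mu (p 1) (p 2); Mu (p 1) (p 3); Ga (p 2) (p 3)]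
  /\ rho n p (pw [:: Tg 2; Sg 1; Sg 2]) = pw [:: Ga (p 2) (p 3); Mu (p 1) (p 3); Mu (p 1) (p 2)].
Proof. by rewrite /= /rl /step /vl /= -/(valid1 n 1) -/(valid1 n 2) h1 h2. Qed.
Lemma rho_sst21 : rho n p (pw [:: Sg 2; Sg 1; Tg 2]) = pw [:: Mu (p 2) (p 3); Mu (p 1) (p 3); Ga (p 1) (p 2)]
  /\ rho n p (pw [:: Tg 1; Sg 2; Sg 1]) = pw [:: Ga (p 1) (p 2); Mu (p 1) (p 3); Mu (p 2) (p 3)].
Proof. by rewrite /= /rl /step /vl /= -/(valid1 n 1) -/(valid1 n 2) h1 h2. Qed.
End R.

Lemma rho_st p : valid1 n 1 -> rho n p (pw [:: Sg 1; Tg 1]) = pw [:: Mu (p 1) (p 2); Ga (p 2) (p 1)]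
  /\ rho n p (pw [:: Tg 1; Sg 1]) = pw [:: Ga (p 1) (p 2); Mu (p 2) (p 1)].
Proof. by move=> h1; rewrite /= /rl /step /vl /= -/(valid1 n 1) h1. Qed.

Section F.
Variable p : nat -> nat.
Hypotheses (h1 : valid1 n 1) (h3 : valid1 n 3).
Lemma rho_fSS : rho n p (pw [:: Sg 1; Sg 3]) = pw [:: Mu (p 1) (p 2); Mu (p 3) (p 4)]
  /\ rho n p (pw [:: Sg 3; Sg 1]) = pw [:: Mu (p 3) (p 4); Mu (p 1) (p 2)].
Proof. by rewrite /= /rl /step /vl /= -/(valid1 n 1) -/(valid1 n 3) h1 h3. Qed.
Lemma rho_fTT : rho n p (pw [:: Tg 1; Tg 3]) = pw [:: Ga (p 1) (p 2); Ga (p 3) (p 4)]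
  /\ rho n p (pw [:: Tg 3; Tg 1]) = pw [:: Ga (p 3) (p 4); Ga (p 1) (p 2)].
Proof. by rewrite /= /rl /step /vl /= -/(valid1 n 1) -/(valid1 n 3) h1 h3. Qed.
Lemma rho_fST : rho n p (pw [:: Sg 1; Tg 3]) = pw [:: Mu (p 1) (p 2); Ga (p 3) (p 4)]
  /\ rho n p (pw [:: Tg 3; Sg 1]) = pw [:: Ga (p 3) (p 4); Mu (p 1) (p 2)].
Proof. by rewrite /= /rl /step /vl /= -/(valid1 n 1) -/(valid1 n 3) h1 h3. Qed.
End F.

Lemma v1 k : 0 < k -> k < n -> valid1 n k.
Proof. by rewrite /valid1 => -> ->. Qed.

Lemma fwd u u' : cong (rel2 n) u u' -> C (ev u) (ev u').
Proof.
elim => {u u'}.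
- move=> u v [] {u v}.
  + move=> i j k hi hj hk hd; have [s [hs he]] := getp (xs := [:: i; j; k]) ltac:(rewrite /= ?inE; unfold dist4, dist3, valid_ix in *; lia) ltac:(rewrite /= ?inE; unfold dist4, dist3, valid_ix in *; lia).
    have e1 := he 0 isT; have e2 := he 1 isT; have e3 := he 2 isT; rewrite /= in e1 e2 e3.
    have hv1 : valid1 n 1 by apply: v1; unfold dist3, valid_ix in *; lia.
    have hv2 : valid1 n 2 by apply: v1; unfold dist3, valid_ix in *; lia.
    have := TR (r1_sss hv1 hv2 isT) hs; case: (rho_sss (fs s) hv1 hv2) => -> ->.
    by rewrite e1 e2 e3.
  + move=> i j k hi hj hk hd; have [s [hs he]] := getp (xs := [:: i; j; k]) ltac:(rewrite /= ?inE; unfold dist4, dist3, valid_ix in *; lia) ltac:(rewrite /= ?inE; unfold dist4, dist3, valid_ix in *; lia).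
    have e1 := he 0 isT; have e2 := he 1 isT; have e3 := he 2 isT; rewrite /= in e1 e2 e3.
    have hv1 : valid1 n 1 by apply: v1; unfold dist3, valid_ix in *; lia.
    have hv2 : valid1 n 2 by apply: v1; unfold dist3, valid_ix in *; lia.
    have := TR (r1_sst hv1 hv2 isT) hs; case: (rho_sst12 (fs s) hv1 hv2) => -> ->.
    by rewrite e1 e2 e3.
  + move=> i j k hi hj hk hd; have [s [hs he]] := getp (xs := [:: i; j; k]) ltac:(rewrite /= ?inE; unfold dist4, dist3, valid_ix in *; lia) ltac:(rewrite /= ?inE; unfold dist4, dist3, valid_ix in *; lia).
    have e1 := he 0 isT; have e2 := he 1 isT; have e3 := he 2 isT; rewrite /= in e1 e2 e3.
    have hv1 : valid1 n 1 by apply: v1; unfold dist3, valid_ix in *; lia.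
    have hv2 : valid1 n 2 by apply: v1; unfold dist3, valid_ix in *; lia.
    have := TR (r1_sst hv2 hv1 isT) hs; case: (rho_sst21 (fs s) hv1 hv2) => -> ->.
    by rewrite e1 e2 e3 => /cong_sym.
  + move=> i j hi hj hd.
    have [s [hs he]] := getp (xs := [:: i; j]) ltac:(rewrite /= ?inE; unfold valid_ix in *; lia)
                                          ltac:(rewrite /= ?inE; unfold valid_ix in *; lia).
    have e1 := he 0 isT; have e2 := he 1 isT; rewrite /= in e1 e2.
    have hv1 : valid1 n 1 by apply: v1; unfold valid_ix in *; lia.
    have := TR (r1_st hv1) hs; case: (rho_st (fs s) hv1) => -> ->.
    by rewrite e1 e2.
  + move=> i j k l hi hj hk hl hd; have [s [hs he]] := getp (xs := [:: i; j; k; l]) ltac:(rewrite /= ?inE; unfold dist4, dist3, valid_ix in *; lia) ltac:(rewrite /= ?inE; unfold dist4, dist3, valid_ix in *; lia).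
    have e1 := he 0 isT; have e2 := he 1 isT; have e3 := he 2 isT; rewrite /= in e1 e2 e3.
    have e4 := he 3 isT; rewrite /= in e4.
    have hv1 : valid1 n 1 by apply: v1; unfold dist4, dist3, valid_ix in *; lia.
    have hv3 : valid1 n 3 by apply: v1; unfold dist4, dist3, valid_ix in *; lia.
    have := TR (r1_far (g := Sg 1) (h := Sg 3) hv1 hv3 isT) hs; case: (rho_fSS (fs s) hv1 hv3) => -> ->.
    by rewrite e1 e2 e3 e4.
  + move=> i j k l hi hj hk hl hd; have [s [hs he]] := getp (xs := [:: i; j; k; l]) ltac:(rewrite /= ?inE; unfold dist4, dist3, valid_ix in *; lia) ltac:(rewrite /= ?inE; unfold dist4, dist3, valid_ix in *; lia).
    have e1 := he 0 isT; have e2 := he 1 isT; have e3 := he 2 isT; rewrite /= in e1 e2 e3.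
    have e4 := he 3 isT; rewrite /= in e4.
    have hv1 : valid1 n 1 by apply: v1; unfold dist4, dist3, valid_ix in *; lia.
    have hv3 : valid1 n 3 by apply: v1; unfold dist4, dist3, valid_ix in *; lia.
    have := TR (r1_far (g := Tg 1) (h := Tg 3) hv1 hv3 isT) hs; case: (rho_fTT (fs s) hv1 hv3) => -> ->.
    by rewrite e1 e2 e3 e4.
  + move=> i j k l hi hj hk hl hd; have [s [hs he]] := getp (xs := [:: i; j; k; l]) ltac:(rewrite /= ?inE; unfold dist4, dist3, valid_ix in *; lia) ltac:(rewrite /= ?inE; unfold dist4, dist3, valid_ix in *; lia).
    have e1 := he 0 isT; have e2 := he 1 isT; have e3 := he 2 isT; rewrite /= in e1 e2 e3.
    have e4 := he 3 isT; rewrite /= in e4.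
    have hv1 : valid1 n 1 by apply: v1; unfold dist4, dist3, valid_ix in *; lia.
    have hv3 : valid1 n 3 by apply: v1; unfold dist4, dist3, valid_ix in *; lia.
    have := TR (r1_far (g := Sg 1) (h := Tg 3) hv1 hv3 isT) hs; case: (rho_fST (fs s) hv1 hv3) => -> ->.
    by rewrite e1 e2 e3 e4.
- move=> g b; rewrite /ev /= cats0 /ev_letter /=; case: b => /=.
    by have := winv_r (rel1 n) (winv (pw (fusing g))); rewrite winvK.
  exact: winv_r.
- move=> u; exact: cong_refl.
- move=> u v _ IH; exact: cong_sym.
- move=> u v w _ IH1 _ IH2; exact: cong_trans IH1 IH2.
- move=> u u' v v' _ IH1 _ IH2; rewrite !ev_cat; exact: cong_cat.
Qed.
End S.

Unset Implicit Arguments.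

Theorem mainTheorem7 (n : nat) (hn : 2 <= n) :
  (forall u : word gen2, wf2 n u -> in_ker (ev u)) /\
  (forall u u' : word gen2, wf2 n u -> wf2 n u' ->
     (cong (rel2 n) u u' <-> cong (rel1 n) (ev u) (ev u'))) /\
  (forall w : word gen1, wf1 n w -> in_ker w ->
     exists u : word gen2, wf2 n u /\ cong (rel1 n) (ev u) w).
Proof.
have gid : gd n id by split.
split; [|split].
- move=> u _; exact: ev_ker.
- move=> u u' hu hu'; split; first exact: fwd.
  move=> h; have := rho_cong h gid; by rewrite !ev_rho_id.
- move=> w hw hk; exists (rho n id w); split; first exact: rho_wf.
  have := KEY hw (s := [::]) isT; rewrite /VW /= => hK.
  apply: cong_sym; apply: (cong_trans hK).
  have hC : E n (map Vg (idxs w)) [::].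
    apply: (@Cox n n.-1); first lia.
      rewrite /idxs all_map; apply: sub_all hw => l /=; rewrite /valid1; lia.
    move=> x; rewrite -piwE; exact: hk.
  have -> : rho n (fs [::]) w = rho n id w by [].
  apply: (cX' (a := ev (rho n id w)) (u := pw (map Vg (idxs w))) (v := [::]) (b := [::])); rewrite ?cats0 //.
Qed.
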